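(* Let $P$ and $P'$ be two temporal patterns over a temporal sequence database $\mathcal{D}_{\text{SEQ}}$ with $P'\subseteq P$. Then $\textit{conf}(P')\ge\textit{conf}(P)$.
   Context: $\mathcal{D}_{\text{SEQ}}$ is a finite collection of temporal sequences (lists of event instances $(\omega,[t_s,t_e])$ of temporal events $E=(\omega,T)$, ordered by start time). A temporal pattern is a list of triples $(r_{ij},E_i,E_j)$ with $r_{ij}\in\{\text{Follows},\text{Contains},\text{Overlaps}\}$; $P'\subseteq P$ means $P'$ is a sub-pattern of $P$ (its triples are among those of $P$). A sequence supports a pattern iff it has at least two instances and each triple's relation holds between some instances of the two events in the sequence. $\textit{supp}(E)$ is the number of sequences containing an instance of $E$; $\textit{supp}(P)$ the number of sequences supporting $P$; $\textit{conf}(P)=\textit{supp}(P)/\max_{E_k\in P}\textit{supp}(E_k)$, the maximum over events occurring in $P$. *)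

(* Defs.v *)
From HB Require Import structures.
From mathcomp Require Import all_boot all_order all_algebra.
Set Implicit Arguments. Unset Strict Implicit. Unset Printing Implicit Defensive.
Import Order.TTheory GRing.Theory Num.Theory.

Inductive trel := Follows | Contains | Overlaps.

Definition trel_eqb (r1 r2 : trel) : bool :=
  match r1, r2 with
  | Follows, Follows | Contains, Contains | Overlaps, Overlaps => true
  | _, _ => false
  end.
Lemma trel_eqP : Equality.axiom trel_eqb.
Proof. by case; case; constructor. Qed.
HB.instance Definition _ := hasDecEq.Build trel trel_eqP.

Section Temporal.
(* Omega : event labels (a temporal event E = (omega, T) is identified by its
   label omega; its instances in a sequence are the instances carrying omega).
   R : time domain. *)
Variables (Omega : eqType) (R : realDomainType).
Local Open Scope ring_scope.

Record instance := Inst { lbl : Omega; ts : R; te : R }.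

Definition tseq := seq instance.
Definition well_ordered (s : tseq) : Prop := sorted (fun a b => ts a <= ts b) s.

Definition holds (r : trel) (a b : instance) : bool :=
  match r with
  | Follows  => te a <= ts b
  | Contains => (ts a <= ts b) && (te b <= te a)
  | Overlaps => [&& ts a < ts b, ts b < te a & te a < te b]
  end.

Definition triple := (trel * Omega * Omega)%type.
Definition pattern := seq triple.

Definition subpattern (P' P : pattern) : Prop := forall t, t \in P' -> t \in P.

Definition supports (s : tseq) (P : pattern) : bool :=
  (2 <= size s)%N &&
  all (fun t : triple =>
    [exists i : 'I_(size s), exists j : 'I_(size s),
      (i != j) &&
      [&& lbl (tnth (in_tuple s) i) == t.1.2,
          lbl (tnth (in_tuple s) j) == t.2 &
          holds t.1.1 (tnth (in_tuple s) i) (tnth (in_tuple s) j)]]) P.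

Definition supp_ev (D : seq tseq) (e : Omega) : nat :=
  count (fun s => has (fun x => lbl x == e) s) D.

Definition supp_pat (D : seq tseq) (P : pattern) : nat :=
  count (fun s => supports s P) D.

Definition events (P : pattern) : seq Omega :=
  flatten [seq [:: t.1.2; t.2] | t <- P].

Definition conf (D : seq tseq) (P : pattern) : rat :=
  (supp_pat D P)%:R / (\max_(e <- events P) supp_ev D e)%N%:R.

End Temporal.

(* Main.v *)
Require Import Defs.
From mathcomp Require Import all_boot all_order all_algebra.
Import Order.TTheory GRing.Theory Num.Theory.
Local Open Scope ring_scope.

Theorem lemma6 (Omega : eqType) (R : realDomainType)
    (D : seq (tseq Omega R)) (P P' : pattern Omega) :
  P' != [::] -> subpattern P' P ->
  conf D P <= conf D P'.
Proof.
case: P' => [//|t P''] _ hsub.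
have supmono : forall s : tseq Omega R, supports s P -> supports s (t :: P'').
  move=> s; rewrite /supports => /andP[h2 /allP hall]; apply/andP; split => //.
  by apply/allP => u /hsub /hall.
have hab : (supp_pat D P <= supp_pat D (t :: P''))%N by apply: sub_count.
have evsub : forall e, e \in events (t :: P'') -> e \in events P.
  move=> e /flatten_mapP[u uP' he]; apply/flatten_mapP; exists u => //.
  exact: hsub.
have hsupt : (supp_pat D (t :: P'') <= supp_ev D t.1.2)%N.
  apply: sub_count => s /=; rewrite /supports => /andP[_ /allP hall].
  have /existsP[i /existsP[j /andP[_ /and3P[/eqP hi _ _]]]] :=
    hall t (mem_head _ _).
  apply/(has_nthP (tnth (in_tuple s) i)); exists i; first exact: ltn_ord.
  by rewrite (tnth_nth (tnth (in_tuple s) i)) /= in hi; rewrite hi.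
have htM : (supp_ev D t.1.2 <= \max_(e <- events (t :: P'')) supp_ev D e)%N.
  by apply: (leq_bigmax_seq _ _ (erefl true)); rewrite /events /= inE eqxx.
set M := (\max_(e <- events P) supp_ev D e)%N in evsub *.
set M' := (\max_(e <- events (t :: P'')) supp_ev D e)%N in htM *.
have hMM : (M' <= M)%N.
  apply/bigmax_leqP_seq => e he _; exact: (leq_bigmax_seq _ (evsub _ he)).
rewrite /conf -/M -/M'.
have [M'0|M'pos] := posnP M'.
  move: htM; rewrite M'0 leqn0 => /eqP ht.
  move: hsupt; rewrite ht leqn0 => /eqP hP'.
  move: hab; rewrite hP' leqn0 => /eqP ->.
  by rewrite !mul0r.
have Mpos : (0 < M)%N by apply: leq_trans hMM.
apply: (@le_trans _ _ ((supp_pat D (t :: P''))%:R / M%:R)).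
  by apply: ler_wpM2r; [rewrite invr_ge0 ler0n | rewrite ler_nat].
apply: ler_wpM2l; first exact: ler0n.
by rewrite lef_pV2 ?posrE ?ltr0n // ler_nat.
Qed.
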